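(* Let $\mathbf T$ be a countable homogeneous tournament and $\mathbf T^*$ an expansion of $\mathbf T$ as in the context. If $\mathrm{Age}(\mathbf T^* )$ has the expansion property relative to $\mathrm{Age}(\mathbf T)$, then for every positive integer $n$, $\mathrm{Age}(\mathbf T[I_n]^* )$ has the expansion property relative to $\mathrm{Age}(\mathbf T[I_n])$, where $\mathbf T[I_n]$ denotes the reduct of $\mathbf T[I_n]^*$ to the language $\{E\}$.
   Context: The age $\mathrm{Age}(\mathbf F)$ of a structure $\mathbf F$ is the class of finite structures embeddable in $\mathbf F$. Expansion property: let $L\subseteq L^*$ be relational languages, $\mathcal K$ a class of finite $L$-structures and $\mathcal K^*$ a class of finite $L^*$-structures whose $L$-reducts lie in $\mathcal K$. $\mathcal K^*$ has the expansion property relative to $\mathcal K$ if for every $\mathbf A\in\mathcal K$ there is $\mathbf B\in\mathcal K$ such that for all $\mathbf A^*,\mathbf B^*\in\mathcal K^*$ whose $L$-reducts are $\mathbf A$ and $\mathbf B$ respectively, $\mathbf A^*$ embeds into $\mathbf B^*$. A tournament is a directed graph in which every pair of distinct vertices carries exactly one directed edge; it is homogeneous if every isomorphism between finite substructures extends to an automorphism. $\mathbf T=(T,E^{\mathbf T})$ is a countable homogeneous tournament, and $\mathbf T^*$ is an expansion of $\mathbf T$ to a countable relational language $L_{\mathbf T^*}\supseteq\{E,<\}$ in which $<$ is interpreted as a linear order $<^*$ on $T$. For a positive integer $n$, $[n]=\{0,\dots,n-1\}$. The structure $\mathbf T[I_n]^*$ has universe $T\times[n]$ and language $L_{\mathbf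 T^*}\cup\{L_0,\dots,L_{n-1}\}$ ($L_i$ new unary symbols), interpreted as follows: $E((x,i),(y,j))$ iff $E^{\mathbf T}(x,y)$; for each $m$-ary $R\in L_{\mathbf T^*}\setminus\{E,<\}$, $R((x_1,i_1),\dots,(x_m,i_m))$ iff $R^{\mathbf T^*}(x_1,\dots,x_m)$; $(x,i)<(y,j)$ iff $x<^*y$, or $x=y$ and $i<j$; and $L_i(x,j)$ iff $j=i$. *)

(* Defs.v *)
From mathcomp Require Import all_boot.
Set Implicit Arguments. Unset Strict Implicit. Unset Printing Implicit Defensive.

Record lang := Lang { sym : Type; ar : sym -> nat }.

Definition structure (L : lang) (A : Type) :=
  forall s : sym L, ('I_(@ar L s) -> A) -> Prop.

Record lmorph (L Ls : lang) := LMorph {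
  lmap : sym L -> sym Ls;
  lmap_ar : forall s, @ar Ls (lmap s) = @ar L s }.

Definition reduct (L Ls : lang) (i : lmorph L Ls) (A : Type)
  (S : structure Ls A) : structure L A :=
  fun s t => S (lmap i s) (fun k => t (cast_ord (lmap_ar i s) k)).

Definition struct_eq (L : lang) (A : Type) (S1 S2 : structure L A) :=
  forall s t, S1 s t <-> S2 s t.

Definition embedding (L : lang) (A B : Type) (SA : structure L A)
  (SB : structure L B) (f : A -> B) :=
  injective f /\ forall s t, SA s t <-> SB s (fun k => f (t k)).

Definition fclass (L : lang) := forall A : finType, structure L A -> Prop.

Definition Age (L : lang) (C : Type) (F : structure L C) : fclass L :=
  fun A SA => exists f : A -> C, embedding SA F f.

Definition expansion_property (L Ls : lang) (i : lmorph L Ls)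
  (Ks : fclass Ls) (K : fclass L) :=
  forall (A : finType) (SA : structure L A), K A SA ->
  exists (B : finType) (SB : structure L B), K B SB /\
    forall (SAs : structure Ls A) (SBs : structure Ls B),
      Ks A SAs -> Ks B SBs ->
      struct_eq (reduct i SAs) SA -> struct_eq (reduct i SBs) SB ->
      exists f : A -> B, embedding SAs SBs f.

(* Homogeneity: every isomorphism between finite substructures (given by
   a finite domain s and a map g injective on s and preserving and
   reflecting all relations on s) extends to an automorphism. *)
Definition homogeneous (L : lang) (C : eqType) (S : structure L C) :=
  forall (s : seq C) (g : C -> C),
    {in s &, injective g} ->
    (forall r (t : 'I_(@ar L r) -> C), (forall k, t k \in s) ->
        (S r t <-> S r (fun k => g (t k)))) ->
    exists h : C -> C, bijective h /\ embedding S S h /\ {in s, h =1 g}.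

Definition tournament (T : Type) (E : T -> T -> Prop) :=
  (forall x, ~ E x x) /\
  (forall x y, x <> y -> (E x y \/ E y x) /\ ~ (E x y /\ E y x)).

Definition strict_linear_order (T : Type) (lt : T -> T -> Prop) :=
  (forall x, ~ lt x x) /\
  (forall x y z, lt x y -> lt y z -> lt x z) /\
  (forall x y, x <> y -> lt x y \/ lt y x).

Definition rel2 (A : Type) (R : A -> A -> Prop) (t : 'I_2 -> A) : Prop :=
  R (t ord0) (t ord_max).

Definition LE : lang := @Lang unit (fun _ => 2).

(* L_{T*} = {E, <} ∪ X : inl false = E, inl true = <, inr x = other symbols. *)
Definition LTs (X : Type) (arX : X -> nat) : lang :=
  @Lang (bool + X)%type (fun s => match s with inl _ => 2 | inr x => arX x end).

Definition LTn (X : Type) (arX : X -> nat) (n : nat) : lang :=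
  @Lang (sym (LTs arX) + 'I_n)%type
    (fun s => match s with inl s' => @ar (LTs arX) s' | inr _ => 1 end).

Definition iE_Ts (X : Type) (arX : X -> nat) : lmorph LE (LTs arX) :=
  @LMorph LE (LTs arX) (fun _ => inl false) (fun _ => erefl).

Definition iE_Tn (X : Type) (arX : X -> nat) (n : nat) : lmorph LE (LTn arX n) :=
  @LMorph LE (LTn arX n) (fun _ => inl (inl false)) (fun _ => erefl).

Definition TS (T : Type) (E : T -> T -> Prop) : structure LE T :=
  fun _ t => rel2 E t.

Definition TstarS (T X : Type) (arX : X -> nat) (E lt : T -> T -> Prop)
  (RX : forall x : X, ('I_(arX x) -> T) -> Prop) : structure (LTs arX) T :=
  fun s => match s return ('I_(@ar (LTs arX) s) -> T) -> Prop with
  | inl false => rel2 E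
  | inl true => rel2 lt
  | inr x => RX x
  end.

Definition TnStarS (T X : Type) (arX : X -> nat) (E lt : T -> T -> Prop)
  (RX : forall x : X, ('I_(arX x) -> T) -> Prop) (n : nat) :
  structure (LTn arX n) (T * 'I_n) :=
  fun s => match s return ('I_(@ar (LTn arX n) s) -> T * 'I_n) -> Prop with
  | inl (inl false) => rel2 (fun a b : T * 'I_n => E a.1 b.1)
  | inl (inl true) =>
      rel2 (fun a b : T * 'I_n => lt a.1 b.1 \/ (a.1 = b.1 /\ (a.2 < b.2)%N))
  | inl (inr x) => fun t => RX x (fun k => (t k).1)
  | inr i => fun t => (t ord0).2 = i
  end.

Arguments iE_Ts {X} arX.
Arguments iE_Tn {X} arX n.
Arguments TS {T} E.
Arguments TstarS {T X arX} E lt RX.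
Arguments TnStarS {T X arX} E lt RX n.
Arguments Age {L C} F.

(* Main.v *)
Require Import Defs.
From mathcomp Require Import all_boot.
From Stdlib Require Import Classical FunctionalExtensionality.
Set Implicit Arguments. Unset Strict Implicit. Unset Printing Implicit Defensive.

Definition tup2 {A : Type} (x y : A) : 'I_2 -> A :=
  fun k => if nat_of_ord k == 0 then x else y.

Lemma tour_eq (T : Type) (E : T -> T -> Prop) : tournament E ->
  forall x y, x = y <-> (~ E x y /\ ~ E y x).
Proof.
move=> [irr tot] x y; split; first by move=> <-; split; apply irr.
move=> [h1 h2]; case: (classic (x = y)) => // /tot [[]] //.
Qed.

Lemma tour_eq2 (T : Type) (E : T -> T -> Prop) : tournament E ->
  forall x y x' y', (E x y <-> E x' y') -> (E y x <-> E y' x') ->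
  (x = y <-> x' = y').
Proof.
move=> hT x y x' y' h1 h2; rewrite (tour_eq hT x y) (tour_eq hT x' y').
tauto.
Qed.


Lemma castK (A : Type) m (p : m = m) (t : 'I_m -> A) :
  (fun k => t (cast_ord p k)) = t.
Proof. apply: functional_extensionality => k; congr t; exact: val_inj. Qed.

Lemma redE (Xt : Type) (ar' : Xt -> nat) n (A : Type)
  (S : structure (LTn ar' n) A) (s : sym LE) (t : 'I_2 -> A) :
  reduct (iE_Tn ar' n) S (s:=s) t <-> S (inl (inl false)) t.
Proof. by rewrite /reduct /= castK. Qed.

Lemma redTsE (Xt : Type) (ar' : Xt -> nat) (A : Type)
  (S : structure (LTs ar') A) (s : sym LE) (t : 'I_2 -> A) :
  reduct (iE_Ts ar') S (s:=s) t <-> S (inl false) t.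
Proof. by rewrite /reduct /= castK. Qed.

Lemma transfer (T Xt : Type) (arX : Xt -> nat) (E lt : T -> T -> Prop)
  (RX : forall x : Xt, ('I_(arX x) -> T) -> Prop) n (A0 : Type)
  (h k : A0 -> T) : injective h -> injective k ->
  (forall s u, TstarS E lt RX s (fun j => h (u j)) <->
               TstarS E lt RX s (fun j => k (u j))) ->
  forall (s : sym (LTn arX n)) (u : 'I_(ar s) -> A0) (w : 'I_(ar s) -> 'I_n),
    TnStarS E lt RX n s (fun j => (h (u j), w j)) <->
    TnStarS E lt RX n s (fun j => (k (u j), w j)).
Proof.
move=> hi ki hk [[[|]|x]|i] u w /=.
- have := hk (inl true) u; rewrite /TnStarS /rel2 /TstarS /=.
  have e1 : h (u ord0) = h (u ord_max) <-> k (u ord0) = k (u ord_max).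
    by split=> [/hi->|/ki->].
  tauto.
- exact: (hk (inl false) u).
- exact: (hk (inr x) u).
- by split.
Qed.

Theorem theorem4p3 (T : countType) (E : T -> T -> Prop)
  (X : countType) (arX : X -> nat) (lt : T -> T -> Prop)
  (RX : forall x : X, ('I_(arX x) -> T) -> Prop) :
  tournament E ->
  homogeneous (TS E) ->
  strict_linear_order lt ->
  expansion_property (iE_Ts arX) (Age (TstarS E lt RX)) (Age (TS E)) ->
  forall n : nat, (0 < n)%N ->
    expansion_property (iE_Tn arX n) (Age (TnStarS E lt RX n))
      (Age (reduct (iE_Tn arX n) (TnStarS E lt RX n))).
Proof.
move=> hT _ hlt hEP n n0 A SA [e [einj he]].
pose s0 := [seq (e a).1 | a <- enum A].
pose A0 := seq_sub s0.
pose SA0 : structure LE A0 := fun _ t => E (val (t ord0)) (val (t ord_max)).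
have hA0 : Age (TS E) A0 SA0.
  by exists val; split; [exact: val_inj | move=> ??; split].
have [B0 [SB0 [hB0 hEmb]]] := hEP A0 SA0 hA0.
have i0 : 'I_n := Ordinal n0.
case: hB0 => e0 [e0inj he0].
exists (B0 * 'I_n)%type.
exists (fun s t => SB0 s (fun k => (t k).1)).
split.
  exists (fun p => (e0 p.1, p.2)); split.
    by move=> [b i] [b' i'] /= [/e0inj -> ->].
  move=> [] t; rewrite (he0 tt); simpl.
  by rewrite /reduct /TS /TnStarS /rel2 /= !cast_ord_id; split.
move=> SAs SBs [f [finj hf]] [g [ginj hg]] hredA hredB.
have fa : forall a a', E (f a).1 (f a').1 <-> E (e a).1 (e a').1.
  move=> a a'.
  have := hf (inl (inl false)) (tup2 a a').
  have := hredA tt (tup2 a a'); rewrite redE.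
  have := he tt (tup2 a a'); rewrite redE.
  rewrite /TnStarS /rel2 /tup2 /=; tauto.
have feq : forall a a', (f a).1 = (f a').1 <-> (e a).1 = (e a').1.
  by move=> a a'; apply: tour_eq2 hT _ _ _ _ (fa a a') (fa a' a).
have gb : forall p q : B0 * 'I_n, E (g p).1 (g q).1 <-> E (e0 p.1) (e0 q.1).
  move=> p q.
  have := hg (inl (inl false)) (tup2 p q).
  have := hredB tt (tup2 p q); rewrite redE.
  have := he0 tt (fun k => (tup2 p q k).1).
  rewrite /TnStarS /TS /rel2 /tup2 /=; tauto.
have geq : forall p q : B0 * 'I_n, (g p).1 = (g q).1 <-> p.1 = q.1.
  move=> p q; rewrite (tour_eq2 hT (gb p q) (gb q p)).
  by split=> [/e0inj|->].
pose h (x : A0) : T := oapp (fun a => (f a).1) (val x) [pick a | (e a).1 == val x].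
have hspec : forall x, exists a, (e a).1 = val x /\ h x = (f a).1.
  move=> x; rewrite /h; case: pickP => [a /eqP ea | none]; first by exists a.
  have := valP x; move=> /mapP [a _ ea].
  by have := none a; rewrite -ea eqxx.
have xaP : forall a, (e a).1 \in s0 by move=> a; apply: map_f; rewrite mem_enum.
pose xa a : A0 := SeqSub (xaP a).
have hxa : forall a, h (xa a) = (f a).1.
  by move=> a; case: (hspec (xa a)) => a' [ea' ->]; apply/feq.
have hinj : injective h.
  move=> x y; case: (hspec x) => a [ea ->]; case: (hspec y) => a' [ea' ->].
  by move/feq; rewrite ea ea' => /val_inj.
have hval : forall x y, E (h x) (h y) <-> E (val x) (val y).
  move=> x y; case: (hspec x) => a [ea ->]; case: (hspec y) => a' [ea' ->].
  by rewrite -ea -ea' fa.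
pose SA0s : structure (LTs arX) A0 := fun s t => TstarS E lt RX s (fun k => h (t k)).
have hA0s : Age (TstarS E lt RX) A0 SA0s.
  by exists h; split=> // ??; split.
have hredA0 : struct_eq (reduct (iE_Ts arX) SA0s) SA0.
  move=> [] t; rewrite redTsE /SA0s /TstarS /rel2 /SA0; exact: hval.
pose g0 b := (g (b, i0)).1.
have gfst : forall p, (g p).1 = g0 p.1 by move=> p; apply/geq.
have g0inj : injective g0 by move=> b b' /geq.
pose SB0s : structure (LTs arX) B0 := fun s t => SBs (inl s) (fun k => (t k, i0)).
have hg0 : forall s t, SB0s s t <-> TstarS E lt RX s (fun k => g0 (t k)).
  move=> s t; rewrite /SB0s hg.
  case: s t => [[|]|x] t /=; rewrite /TnStarS /TstarS /rel2 /=; try by split.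
  split; last by left.
  case=> // [[/g0inj eq]]; rewrite /g0 eq ltnn.
  done.
have hB0s : Age (TstarS E lt RX) B0 SB0s by exists g0; split.
have hredB0 : struct_eq (reduct (iE_Ts arX) SB0s) SB0.
  move=> [] t; rewrite redTsE /SB0s.
  have := hredB tt (fun k => (t k, i0)); rewrite redE; exact.
have [phi [phiinj hphi]] := hEmb SA0s SB0s hA0s hB0s hredA0 hredB0.
pose kk x := g0 (phi x).
have kkinj : injective kk by move=> x y /g0inj /phiinj.
have hk : forall s u, TstarS E lt RX s (fun j => h (u j)) <->
               TstarS E lt RX s (fun j => kk (u j)).
  by move=> s u; rewrite -hg0 -hphi.
pose sig b i := (g (b, i)).2.
have siginj : forall b, injective (sig b).
  move=> b i j eq.
  have : g (b, i) = g (b, j).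
    by rewrite [g (b, i)]surjective_pairing [g (b, j)]surjective_pairing !gfst /=; congr pair.
  by move/ginj => [].
pose psi a := (phi (xa a), finv (sig (phi (xa a))) (f a).2).
have gpsi : forall a, g (psi a) = (kk (xa a), (f a).2).
  move=> a; rewrite [LHS]surjective_pairing gfst /=; congr pair.
  exact: (f_finv (siginj _)).
have fpsi : forall a, f a = (h (xa a), (f a).2).
  by move=> a; rewrite hxa -surjective_pairing.
exists psi; split.
  move=> a a' eq; have := congr1 g eq; rewrite !gpsi => [[/kkinj exa e2]].
  apply: finj.
  by rewrite [f a]surjective_pairing [f a']surjective_pairing e2 -!hxa exa.
move=> s t; rewrite hf hg.
have -> : (fun k => f (t k)) = fun j => (h (xa (t j)), (f (t j)).2).
  by apply: functional_extensionality => j; apply: fpsi.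
have -> : (fun k => g (psi (t k))) = fun j => (kk (xa (t j)), (f (t j)).2).
  by apply: functional_extensionality => j; apply: gpsi.
exact: transfer.
Qed.
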